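(* There exists a snowflaking function $h$ such that for every $n\in\mathbb N$ there is a metric space $(X_n,d_n)$ of cardinality $n$ for which $(X_n,h\circ d_n)$ admits an isometric embedding into the $2$-dimensional Euclidean space $\mathbb R^2$. In particular, no bound depending only on $h$ and the dimension can hold on the cardinality of a metric space whose $h$-snowflake embeds isometrically into a finite-dimensional normed space.
   Context: Let $\mathbb R_{\geq}=[0,\infty)$. A function $h:\mathbb R_{\geq}\to\mathbb R_{\geq}$ is called a snowflaking function if: (S1) $h(0)=0$; (S2) $h$ is concave; (S3) $h(t)/t\to\infty$ as $t\to0^+$; (S4) $h(t)/t\to 0$ as $t\to\infty$. For such $h$ and a metric $d$ on $X$, $h\circ d$ is again a metric on $X$; $(X,h\circ d)$ is called the $h$-snowflake of $(X,d)$. *)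

(* Defs.v *)
From Stdlib Require Import Reals Lra.
Open Scope R_scope.

(* Snowflaking function h : [0,oo) -> [0,oo), represented as h : R -> R
   whose behaviour is only constrained on [0,oo). *)
Definition concave_on_nonneg (h : R -> R) : Prop :=
  forall x y t, 0 <= x -> 0 <= y -> 0 <= t <= 1 ->
    t * h x + (1 - t) * h y <= h (t * x + (1 - t) * y).

Definition snowflaking (h : R -> R) : Prop :=
  (forall t, 0 <= t -> 0 <= h t) /\
  h 0 = 0 /\
  concave_on_nonneg h /\
  (forall M, exists delta, 0 < delta /\
     forall t, 0 < t < delta -> M < h t / t) /\
  (forall eps, 0 < eps -> exists T, 0 < T /\
     forall t, T < t -> Rabs (h t / t) < eps).

Definition is_metric (X : Type) (d : X -> X -> R) : Prop :=
  (forall x y, 0 <= d x y) /\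
  (forall x y, d x y = 0 <-> x = y) /\
  (forall x y, d x y = d y x) /\
  (forall x y z, d x z <= d x y + d y z).

Definition euclid2 (p q : R * R) : R :=
  sqrt ((fst p - fst q) ^ 2 + (snd p - snd q) ^ 2).

Definition fin (n : nat) : Type := { i : nat | (i < n)%nat }.

(* Main.v *)
Require Import Defs.
From Stdlib Require Import Reals Lra Lia.
From Coquelicot Require Import Rbar Lub.
From Stdlib Require Import ClassicalDescription ProofIrrelevance.
Open Scope R_scope.

Definition Mn (n : nat) : R := (INR n + 1)^2.
Fixpoint bet (n : nat) : R := match n with 0%nat => 1 | S k => 3 * Mn k ^ 4 * bet k end.
Definition alp (m : nat) : R := / (INR m + 1).
Definition ell (m : nat) (t : R) : R := alp m * t + bet m.
Definition Hf (t : R) : R := real (Glb_Rbar (fun y => exists m, y = ell m t)).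
Definition hh (t : R) : R := if Rle_dec t 0 then 0 else Hf t.

Lemma Mn_ge1 n : 1 <= Mn n.
Proof. unfold Mn. pose proof (pos_INR n). nra. Qed.

Lemma bet_ge1 n : 1 <= bet n.
Proof. induction n; simpl. lra. pose proof (Mn_ge1 n).
  assert (1 <= Mn n ^ 4) by (rewrite <- (pow1 4); apply pow_incr; lra). nra. Qed.

Lemma bet_mono n m : (n <= m)%nat -> bet n <= bet m.
Proof. induction 1. lra. simpl. pose proof (Mn_ge1 m). pose proof (bet_ge1 m).
  assert (1 <= Mn m ^ 4) by (rewrite <- (pow1 4); apply pow_incr; lra). nra. Qed.

Lemma alp_pos m : 0 < alp m.
Proof. unfold alp. pose proof (pos_INR m). apply Rinv_0_lt_compat. lra. Qed.

Lemma ell_ge1 m t : 0 <= t -> 1 <= ell m t.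
Proof. intros. unfold ell. pose proof (alp_pos m). pose proof (bet_ge1 m). nra. Qed.

Lemma Hf_spec t : 0 <= t ->
  (forall m, Hf t <= ell m t) /\ (forall w, (forall m, w <= ell m t) -> w <= Hf t).
Proof.
  intros Ht. unfold Hf.
  destruct (Glb_Rbar_correct (fun y => exists m, y = ell m t)) as [H1 H2].
  assert (Hlb : Rbar_le (Finite 0) (Glb_Rbar (fun y => exists m, y = ell m t))).
  { apply H2. intros x [m ->]. simpl. pose proof (ell_ge1 m t Ht). lra. }
  assert (Hub : Rbar_le (Glb_Rbar (fun y => exists m, y = ell m t)) (Finite (ell 0 t))).
  { apply H1. exists 0%nat. reflexivity. }
  destruct (Glb_Rbar (fun y => exists m, y = ell m t)) as [g| |] eqn:E; simpl in *; try contradiction.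
  split.
  - intros m. specialize (H1 (ell m t) (ex_intro _ m eq_refl)). exact H1.
  - intros w Hw. specialize (H2 (Finite w)). simpl in H2. apply H2.
    intros x [m ->]. simpl. apply Hw.
Qed.

Lemma hh_le t m : 0 <= t -> hh t <= ell m t.
Proof. intros Ht. unfold hh. destruct (Rle_dec t 0).
  - pose proof (ell_ge1 m t Ht). lra.
  - apply (proj1 (Hf_spec t Ht)). Qed.

Lemma hh_ge1 t : 0 < t -> 1 <= hh t.
Proof. intros Ht. unfold hh. destruct (Rle_dec t 0). lra.
  apply (proj2 (Hf_spec t (Rlt_le _ _ Ht))). intros m. apply ell_ge1. lra. Qed.

Lemma hh_snow : snowflaking hh.
Proof.
  split; [|split; [|split; [|split]]].
  - intros t Ht. destruct (Rle_dec t 0) as [r|r]. unfold hh; destruct (Rle_dec t 0); lra.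
    pose proof (hh_ge1 t ltac:(lra)). lra.
  - unfold hh. destruct (Rle_dec 0 0); lra.
  - intros x y t Hx Hy Ht.
    set (z := t * x + (1 - t) * y).
    destruct (Rle_dec z 0) as [Hz|Hz].
    + assert (P1 : 0 <= t * x) by (apply Rmult_le_pos; lra).
      assert (P2 : 0 <= (1-t) * y) by (apply Rmult_le_pos; lra).
      assert (Hz0 : z = 0) by (unfold z in *; lra).
      unfold z in Hz0.
      assert (t * x = 0) by lra. assert ((1-t) * y = 0) by lra.
      assert (E1 : t * hh x = 0).
      { destruct (Req_dec t 0) as [->|]. ring. assert (x = 0) by (apply (Rmult_eq_reg_l t); [rewrite Rmult_0_r; lra|lra]).
        subst x. unfold hh. destruct (Rle_dec 0 0); lra. }
      assert (E2 : (1-t) * hh y = 0).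
      { destruct (Req_dec (1-t) 0) as [->|]. ring. assert (y = 0) by (apply (Rmult_eq_reg_l (1-t)); [rewrite Rmult_0_r; lra|lra]).
        subst y. unfold hh. destruct (Rle_dec 0 0); lra. }
      unfold z. rewrite Hz0. unfold hh at 3. destruct (Rle_dec 0 0); lra.
    + unfold hh at 3. fold z. destruct (Rle_dec z 0); [contradiction|].
      apply (proj2 (Hf_spec z ltac:(lra))). intros m.
      pose proof (hh_le x m Hx). pose proof (hh_le y m Hy).
      assert (ell m z = t * ell m x + (1-t) * ell m y) by (unfold ell, z; ring).
      rewrite H1. nra.
  - intros M. exists (/ (Rabs M + 1)). split.
    + apply Rinv_0_lt_compat. pose proof (Rabs_pos M). lra.
    + intros t [Ht1 Ht2]. pose proof (hh_ge1 t Ht1).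
      assert (Hr : Rabs M + 1 < / t).
      { rewrite <- (Rinv_inv (Rabs M + 1)). apply Rinv_lt_contravar; [apply Rmult_lt_0_compat; [lra| apply Rinv_0_lt_compat; pose proof (Rabs_pos M); lra] | exact Ht2]. }
      assert (/ t <= hh t / t).
      { unfold Rdiv. rewrite <- (Rmult_1_l (/ t)) at 1. apply Rmult_le_compat_r.
        left; apply Rinv_0_lt_compat; lra. lra. }
      pose proof (Rle_abs M). lra.
  - intros eps He.
    destruct (INR_unbounded (2 / eps)) as [m Hm].
    exists (2 * bet m / eps + 1). split.
    + pose proof (bet_ge1 m). assert (0 < 2 * bet m / eps) by (apply Rdiv_lt_0_compat; lra). lra.
    + intros t Ht.
      assert (Hb : 0 < 2 * bet m / eps) by (pose proof (bet_ge1 m); apply Rdiv_lt_0_compat; lra).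
      assert (Htp : 0 < t) by lra.
      pose proof (hh_ge1 t Htp). pose proof (hh_le t m ltac:(lra)).
      assert (0 <= hh t / t) by (unfold Rdiv; apply Rmult_le_pos; [lra| left; apply Rinv_0_lt_compat; lra]).
      rewrite Rabs_right by lra.
      apply (Rmult_lt_reg_r t). lra. unfold Rdiv. rewrite Rmult_assoc, Rinv_l, Rmult_1_r by lra.
      unfold ell, alp in H0.
      assert (Ha : / (INR m + 1) < eps / 2).
      { rewrite <- (Rinv_inv (eps/2)). apply Rinv_lt_contravar.
        assert (0 < / (eps/2)) by (apply Rinv_0_lt_compat; lra). pose proof (pos_INR m). nra.
        replace (/ (eps/2)) with (2/eps) by (field; lra). lra. }
      assert (Hbt : bet m < eps / 2 * t).
      { assert (2 * bet m / eps * eps = 2 * bet m) by (field; lra).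
        assert (2 * bet m / eps < t) by lra. nra. }
      nra.
Qed.
Lemma slack u1 u2 v1 v2 K L : 0 < K -> K <= (u1*v2-u2*v1)^2 -> 0 < L ->
  u1^2+u2^2 <= L^2 -> v1^2+v2^2 <= L^2 -> (u1-v1)^2+(u2-v2)^2 <= L^2 ->
  sqrt ((u1-v1)^2+(u2-v2)^2) + K/(3*L^3) <= sqrt (u1^2+u2^2) + sqrt (v1^2+v2^2).
Proof.
  intros HK Hc HL Ha Hb Hcc.
  set (a := sqrt (u1^2+u2^2)). set (b := sqrt (v1^2+v2^2)).
  set (c := sqrt ((u1-v1)^2+(u2-v2)^2)).
  assert (a2 : a * a = u1^2+u2^2) by (apply sqrt_sqrt; apply Rplus_le_le_0_compat; apply pow2_ge_0).
  assert (b2 : b * b = v1^2+v2^2) by (apply sqrt_sqrt; apply Rplus_le_le_0_compat; apply pow2_ge_0).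
  assert (c2 : c * c = (u1-v1)^2+(u2-v2)^2) by (apply sqrt_sqrt; apply Rplus_le_le_0_compat; apply pow2_ge_0).
  assert (a0 : 0 <= a) by apply sqrt_pos. assert (b0 : 0 <= b) by apply sqrt_pos.
  assert (c0 : 0 <= c) by apply sqrt_pos.
  assert (aL : a <= L).
  { assert (a*a <= L*L) by (rewrite a2; simpl in Ha; lra). nra. }
  assert (bL : b <= L).
  { assert (b*b <= L*L) by (rewrite b2; simpl in Hb; lra). nra. }
  assert (cL : c <= L).
  { assert (c*c <= L*L) by (rewrite c2; simpl in Hcc; lra). nra. }
  set (uv := u1*v1 + u2*v2).
  assert (E : (a*b)*(a*b) = uv*uv + (u1*v2-u2*v1)^2).
  { replace ((a*b)*(a*b)) with ((a*a)*(b*b)) by ring. rewrite a2, b2. unfold uv. ring. }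
  assert (ab0 : 0 <= a*b) by nra.
  assert (Hge : uv <= a*b /\ - uv <= a*b) by (split; nra).
  set (w := a*b + uv). set (w' := a*b - uv).
  assert (ww : w * w' = (u1*v2-u2*v1)^2) by (unfold w, w'; nra).
  assert (w'L : w' <= 2 * L^2) by (unfold w'; nra).
  assert (w'0 : 0 < w') by (unfold w'; nra).
  assert (w0 : K <= w * (2 * L^2)) by nra.
  assert (S : (a+b)*(a+b) - c*c = 2 * w) by (unfold w, uv; nra).
  assert (w00 : 0 <= w) by (unfold w; lra).
  assert (cab : c <= a + b).
  { destruct (Rle_dec c (a+b)) as [|n]; [assumption|].
    assert ((a+b)*(a+b) < c*c) by (apply Rnot_le_lt in n; nra). lra. }
  assert (S2 : (a+b-c)*(a+b+c) = 2*w) by (rewrite <- S; ring).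
  assert (Hk : K/(3*L^3) * (3*L^3) = K) by (field; lra).
  assert (HL3 : 0 < L^3) by (apply pow_lt; lra).
  (* (a+b-c) * 3L * 2L^2 >= 2w*2L^2 >= 2K *)
  assert (T : K <= (a+b-c) * (3 * L^3)).
  { assert (a+b+c <= 3*L) by lra.
    assert (0 <= a+b-c) by lra.
    assert ((a+b-c)*(a+b+c) <= (a+b-c)*(3*L)) by nra.
    nra. }
  assert (K/(3*L^3) <= a+b-c).
  { apply (Rmult_le_reg_r (3*L^3)). lra. rewrite Hk. exact T. }
  lra.
Qed.

Definition lam n := 3 * Mn n ^ 3 * bet n.
Definition P n (x : fin n) : R * R :=
  (lam n * INR (proj1_sig x), lam n * INR (proj1_sig x) ^ 2).
Definition Dd n (x y : fin n) := euclid2 (P n x) (P n y).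
Definition dd n (x y : fin n) : R :=
  if excluded_middle_informative (x = y) then 0 else (Dd n x y - bet n) * (INR n + 1).

Lemma lam_pos n : 0 < lam n.
Proof. unfold lam. pose proof (Mn_ge1 n). pose proof (bet_ge1 n).
  assert (0 < Mn n ^ 3) by (apply pow_lt; lra). nra. Qed.

Lemma nat_sq_ge1 i j : i <> j -> 1 <= (INR i - INR j)^2.
Proof. intros H. destruct (Nat.lt_gt_cases i j) as [[Hl|Hl] _]; [exact H| |].
  - apply le_INR in Hl. rewrite S_INR in Hl. nra.
  - apply le_INR in Hl. rewrite S_INR in Hl. nra. Qed.

Lemma fin_neq n (x y : fin n) : x <> y -> proj1_sig x <> proj1_sig y.
Proof. destruct x as [i Hi], y as [j Hj]; simpl. intros H E. subst j.
  apply H. f_equal. apply proof_irrelevance. Qed.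

Lemma fin_le n (x : fin n) : 0 <= INR (proj1_sig x) <= INR n.
Proof. destruct x as [i Hi]; simpl. split. apply pos_INR. apply le_INR. lia. Qed.

Lemma Qbound n (a b : R) : 0 <= a <= INR n -> 0 <= b <= INR n ->
  (lam n * a - lam n * b)^2 + (lam n * a^2 - lam n * b^2)^2 <= (lam n * Mn n)^2.
Proof.
  intros Ha Hb. pose proof (lam_pos n). set (r := INR n) in *.
  assert (H1 : (a - b)^2 <= r^2) by nra.
  assert (H2 : (a^2 - b^2)^2 <= (r^2)^2).
  { assert (0 <= a^2 <= r^2) by nra. assert (0 <= b^2 <= r^2) by nra. nra. }
  assert (H3 : r^2 + (r^2)^2 <= (Mn n)^2).
  { unfold Mn. fold r. assert (0 <= r) by lra. nra. }
  replace ((lam n * a - lam n * b)^2 + (lam n * a^2 - lam n * b^2)^2)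
    with (lam n ^2 * ((a-b)^2 + (a^2-b^2)^2)) by ring.
  replace ((lam n * Mn n)^2) with (lam n ^ 2 * Mn n ^2) by ring.
  apply Rmult_le_compat_l. nra. lra.
Qed.

Lemma Dd_eq n (x y : fin n) : Dd n x y =
  sqrt ((lam n * INR (proj1_sig x) - lam n * INR (proj1_sig y))^2 +
        (lam n * INR (proj1_sig x)^2 - lam n * INR (proj1_sig y)^2)^2).
Proof. reflexivity. Qed.

Lemma Dd_bounds n (x y : fin n) : x <> y -> lam n <= Dd n x y <= lam n * Mn n.
Proof.
  intros H. pose proof (fin_neq n x y H) as Hne. rewrite Dd_eq.
  pose proof (lam_pos n). pose proof (Mn_ge1 n).
  split.
  - rewrite <- (sqrt_pow2 (lam n)) at 1 by lra. apply sqrt_le_1_alt.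
    pose proof (nat_sq_ge1 _ _ Hne).
    replace ((lam n * INR (proj1_sig x) - lam n * INR (proj1_sig y))^2) with
      (lam n ^2 * (INR (proj1_sig x) - INR (proj1_sig y))^2) by ring.
    assert (0 <= (lam n * INR (proj1_sig x)^2 - lam n * INR (proj1_sig y)^2)^2) by apply pow2_ge_0.
    assert (0 < lam n ^ 2) by (apply pow_lt; lra).
    assert (lam n^2 * 1 <= lam n ^2 * (INR (proj1_sig x) - INR (proj1_sig y))^2)
      by (apply Rmult_le_compat_l; lra). lra.
  - rewrite <- (sqrt_pow2 (lam n * Mn n)) by (apply Rmult_le_pos; lra). apply sqrt_le_1_alt.
    apply Qbound; apply fin_le.
Qed.

Lemma window n D : lam n <= D <= lam n * Mn n ->
  forall m, ell n ((D - bet n) * (INR n + 1)) <= ell m ((D - bet n) * (INR n + 1)).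
Proof.
  intros [H1 H2] m. pose proof (bet_ge1 n). pose proof (Mn_ge1 n).
  assert (En : ell n ((D - bet n) * (INR n + 1)) = D).
  { unfold ell, alp. field. pose proof (pos_INR n). lra. }
  rewrite En. pose proof (pos_INR n) as Pn. pose proof (pos_INR m) as Pm.
  assert (Hlam : (INR n + 1) * bet n <= lam n).
  { unfold lam, Mn. assert (1 <= INR n + 1) by lra.
    assert (INR n + 1 <= ((INR n + 1)^2)^3).
    { replace (((INR n + 1)^2)^3) with ((INR n + 1) * (INR n + 1)^5) by ring.
      assert (1 <= (INR n + 1)^5) by (rewrite <- (pow1 5); apply pow_incr; lra). nra. }
    nra. }
  destruct (Nat.lt_total m n) as [Hl|[He|Hg]].
  - apply le_INR in Hl. rewrite S_INR in Hl.
    unfold ell, alp. pose proof (bet_ge1 m).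
    assert (0 < INR m + 1) by lra. assert (INR m + 1 + 1 <= INR n + 1) by lra.
    set (p := INR m + 1) in *. set (q := INR n + 1) in *.
    assert (/ p * ((D - bet n) * q) >= D).
    { apply Rle_ge. apply (Rmult_le_reg_l p). lra.
      replace (p * (/ p * ((D - bet n) * q))) with ((D - bet n) * q) by (field; lra).
      assert (D >= bet n * q) by lra.
      assert (p*D <= (q-1)*D) by (apply Rmult_le_compat_r; pose proof (lam_pos n); lra). lra. }
    lra.
  - subst. lra.
  - assert (bet (S n) <= bet m) by (apply bet_mono; lia).
    simpl in H3. unfold lam in H2.
    unfold ell. assert (0 <= alp m * ((D - bet n) * (INR n + 1))).
    { apply Rmult_le_pos. left; apply alp_pos. apply Rmult_le_pos. nra. lra. }
    assert (lam n * Mn n = 3 * Mn n ^ 4 * bet n) by (unfold lam; ring).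
    nra.
Qed.

Lemma euclid_sym p q : euclid2 p q = euclid2 q p.
Proof. unfold euclid2. f_equal. ring. Qed.

Lemma euclid_refl p : euclid2 p p = 0.
Proof. unfold euclid2. replace ((fst p - fst p)^2 + (snd p - snd p)^2) with 0 by ring.
  apply sqrt_0. Qed.

Lemma Dd_tri n (x y z : fin n) : x <> y -> y <> z -> x <> z ->
  Dd n x z + bet n <= Dd n x y + Dd n y z.
Proof.
  intros Hxy Hyz Hxz.
  pose proof (fin_neq _ _ _ Hxy) as N1. pose proof (fin_neq _ _ _ Hyz) as N2.
  pose proof (fin_neq _ _ _ Hxz) as N3.
  rewrite (Dd_eq n x y), (Dd_eq n x z).
  unfold Dd. rewrite euclid_sym. fold (Dd n z y). rewrite Dd_eq.
  set (i := INR (proj1_sig x)). set (j := INR (proj1_sig y)). set (k := INR (proj1_sig z)).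
  set (l := lam n).
  pose proof (lam_pos n) as Hl. fold l in Hl. pose proof (Mn_ge1 n).
  assert (Hs := slack (l*i - l*j) (l*i^2 - l*j^2) (l*k - l*j) (l*k^2 - l*j^2) (l^4) (l * Mn n)).
  replace ((l*i - l*j) - (l*k - l*j)) with (l*i - l*k) in Hs by ring.
  replace ((l*i^2 - l*j^2) - (l*k^2 - l*j^2)) with (l*i^2 - l*k^2) in Hs by ring.
  replace (l^4 / (3 * (l * Mn n)^3)) with (bet n) in Hs.
  2:{ unfold l, lam. field. pose proof (bet_ge1 n); split; lra. }
  apply Hs.
  - apply pow_lt; lra.
  - replace ((l*i - l*j) * (l*k^2 - l*j^2) - (l*i^2 - l*j^2) * (l*k - l*j)) with
      (l^2 * ((i-j)*(k-j)*(k-i))) by ring.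
    pose proof (nat_sq_ge1 _ _ N1). pose proof (nat_sq_ge1 _ _ N2).
    pose proof (nat_sq_ge1 _ _ N3). fold i j k in H0, H1, H2.
    replace ((l ^ 2 * ((i - j) * (k - j) * (k - i))) ^ 2) with
      (l^4 * ((i-j)^2 * ((j-k)^2 * (i-k)^2))) by ring.
    rewrite <- (Rmult_1_r (l^4)) at 1. apply Rmult_le_compat_l.
    left; apply pow_lt; lra.
    assert (1 <= (j-k)^2 * (i-k)^2) by nra. nra.
  - nra.
  - apply Qbound; apply fin_le.
  - apply Qbound; apply fin_le.
  - apply Qbound; apply fin_le.
Qed.

Theorem mainTheorem10 :
  exists h : R -> R, snowflaking h /\
    forall n : nat, exists d : fin n -> fin n -> R,
      is_metric (fin n) d /\
      exists f : fin n -> R * R,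
        forall x y : fin n, euclid2 (f x) (f y) = h (d x y).
Proof.
  exists hh. split. exact hh_snow.
  intros n. exists (dd n).
  assert (Dpos : forall x y, x <> y -> 0 < dd n x y).
  { intros x y H. unfold dd. destruct (excluded_middle_informative (x = y)). contradiction.
    pose proof (Dd_bounds n x y H). pose proof (lam_pos n). pose proof (pos_INR n).
    assert (bet n < lam n).
    { unfold lam. pose proof (bet_ge1 n). pose proof (Mn_ge1 n).
      assert (1 <= Mn n ^ 3) by (rewrite <- (pow1 3); apply pow_incr; lra). nra. }
    apply Rmult_lt_0_compat; lra. }
  assert (Dsym : forall x y, dd n x y = dd n y x).
  { intros x y. unfold dd. destruct (excluded_middle_informative (x = y)), (excluded_middle_informative (y = x)); subst; try congruence.
    unfold Dd. rewrite euclid_sym. reflexivity. }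
  split; [split; [|split; [|split]]|].
  - intros x y. destruct (excluded_middle_informative (x = y)) as [->|H].
    unfold dd. destruct (excluded_middle_informative (y = y)); [lra|congruence].
    left. apply Dpos. exact H.
  - intros x y. split.
    + intros E. destruct (excluded_middle_informative (x = y)) as [|H]; [assumption|].
      pose proof (Dpos x y H). lra.
    + intros ->. unfold dd. destruct (excluded_middle_informative (y = y)); [lra|congruence].
  - exact Dsym.
  - intros x y z.
    assert (Z : forall u, dd n u u = 0).
    { intros u. unfold dd. destruct (excluded_middle_informative (u = u)); [lra|congruence]. }
    destruct (excluded_middle_informative (x = z)) as [->|Hxz].
    { rewrite Z. destruct (excluded_middle_informative (z = y)) as [->|H].
      rewrite Z; lra. pose proof (Dpos z y H). pose proof (Dpos y z (not_eq_sym H)). lra. }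
    destruct (excluded_middle_informative (x = y)) as [->|Hxy].
    { rewrite Z. lra. }
    destruct (excluded_middle_informative (y = z)) as [->|Hyz].
    { rewrite Z. lra. }
    unfold dd.
    destruct (excluded_middle_informative (x = z)); [contradiction|].
    destruct (excluded_middle_informative (x = y)); [contradiction|].
    destruct (excluded_middle_informative (y = z)); [contradiction|].
    pose proof (Dd_tri n x y z Hxy Hyz Hxz). pose proof (pos_INR n).
    assert (Dd n x z - bet n <= (Dd n x y - bet n) + (Dd n y z - bet n)) by lra.
    assert ((Dd n x z - bet n) * (INR n + 1) <= ((Dd n x y - bet n) + (Dd n y z - bet n)) * (INR n + 1))
      by (apply Rmult_le_compat_r; lra).
    lra.
  - exists (P n). intros x y.
    destruct (excluded_middle_informative (x = y)) as [->|H].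
    + rewrite euclid_refl. unfold dd. destruct (excluded_middle_informative (y = y)); [|congruence].
      unfold hh. destruct (Rle_dec 0 0); lra.
    + pose proof (Dpos x y H) as Hp.
      unfold dd in *. destruct (excluded_middle_informative (x = y)); [contradiction|].
      unfold hh. destruct (Rle_dec _ 0) as [r|r]; [lra|].
      pose proof (Dd_bounds n x y H) as B.
      destruct (Hf_spec ((Dd n x y - bet n) * (INR n + 1)) ltac:(lra)) as [S1 S2].
      assert (E : ell n ((Dd n x y - bet n) * (INR n + 1)) = Dd n x y).
      { unfold ell, alp. field. pose proof (pos_INR n). lra. }
      fold (Dd n x y).
      pose proof (S1 n). pose proof (S2 _ (window n _ B)). lra.
Qed.
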